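(* Let $(X,\sim)$, $U$ and $\tau$ satisfy (C1), (C1'), (C2), and let $\mathcal M(U,\tau)=(X,(U_x)_{x\in X})$ be as constructed below. Then $\mathcal M(U,\tau)$ always satisfies (LM0), (LM1), (LM1'), and the following are equivalent: (i) $\mathcal M(U,\tau)$ is a local Moufang set; (ii) $h_x^{-1}Uh_x=U$ for all units $x\in X$; (iii) $U^\tau=U^{\mu_x}$ for all units $x\in X$.
   Context: Group actions are right actions; $g^h=h^{-1}gh$; permutations are composed left to right. For a set $X$ with equivalence relation $\sim$, $\overline x$ is the class of $x$, $\overline X$ the set of classes, $\mathrm{Sym}(X,\sim)$ the group of bijections $g$ with $x\sim y\iff xg\sim yg$, and for $U\le\mathrm{Sym}(X,\sim)$, $\overline U$ is the induced permutation group of $\overline X$. A local Moufang set is $(X,\sim)$ with $|\overline X|>2$ and subgroups $U_x\le\mathrm{Sym}(X,\sim)$ ($x\in X$) with: (LM0) $x\sim y\Rightarrow\overline{U_x}=\overline{U_y}$; (LM1) $U_x$ fixes $x$ and is sharply transitive on $X\setminus\overline x$; (LM1') $\overline{U_x}$ fixes $\overline x$ and is sharply transitive on $\overline X\setminus\{\overline x\}$; (LM2) $U_x^g=U_{xg}$ for all $x$ and all $g\in\langle U_y\mid y\in X\rangle$. Construction data: a set with equivalence relation $(X,\sim)$ with $|\overline X|>2$, a subgroup $U\le\mathrm{Sym}(X,\sim)$ and $\tau\in\mathrm{Sym}(X,\sim)$ such that (C1) $U$ fixes a point, called $\infty$, and acts sharply transitively on $X\setminus\overline\infty$; (C1') $\overline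 U$ acts sharply transitively on $\overline X\setminus\{\overline\infty\}$; (C2) $\infty\tau\not\sim\infty$ and $\infty\tau^2=\infty$; put $0:=\infty\tau$. For $x\not\sim\infty$ let $\alpha_x$ be the unique element of $U$ with $0\alpha_x=x$, $-x:=0\alpha_x^{-1}$, and $\gamma_x:=\alpha_x^\tau$. Define $U_\infty:=U$, $U_0:=U^\tau$, $U_x:=U_0^{\alpha_x}$ for $x\not\sim\infty$ and $U_x:=U_\infty^{\gamma_{x\tau^{-1}}}$ for $x\sim\infty$; this is $\mathcal M(U,\tau)$. A unit is $x$ with $x\not\sim0$, $x\not\sim\infty$. For a unit $x$: $\mu_x:=\gamma_{(-x)\tau^{-1}}\,\alpha_x\,\gamma_{-(x\tau^{-1})}$ and $h_x:=\tau\,\alpha_x\,\tau^{-1}\,\alpha_{-(x\tau^{-1})}\,\tau\,\alpha_{-\left((-(x\tau^{-1}))\tau\right)}$. *)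

(* Defs.v *)
From Stdlib Require Import Classical ClassicalEpsilon FunctionalExtensionality.

Set Implicit Arguments.

(* Bijections of X, given with their inverse. Right action: [act x g] = xg. *)
Record perm (X : Type) := Perm {
  pf : X -> X;
  pinv : X -> X;
  pK : forall x, pinv (pf x) = x;
  pKV : forall x, pf (pinv x) = x }.

Definition act {X : Type} (x : X) (g : perm X) : X := pf g x.

Definition pid (X : Type) : perm X :=
  @Perm X (fun x => x) (fun x => x) (fun x => eq_refl) (fun x => eq_refl).

(* product g h : first g then h (permutations composed left to right) *)
Program Definition pmul {X : Type} (g h : perm X) : perm X :=
  @Perm X (fun x => pf h (pf g x)) (fun x => pinv g (pinv h x)) _ _.
Next Obligation. now rewrite pK, pK. Qed.
Next Obligation. now rewrite pKV, pKV. Qed.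

Program Definition pinvp {X : Type} (g : perm X) : perm X :=
  @Perm X (pinv g) (pf g) _ _.
Next Obligation. apply pKV. Qed.
Next Obligation. apply pK. Qed.

Definition pconj {X : Type} (g h : perm X) : perm X := pmul (pmul (pinvp h) g) h.

Definition pset (X : Type) := perm X -> Prop.

Definition pset_eq {X : Type} (A B : pset X) : Prop := forall g, A g <-> B g.

Definition pset_conj {X : Type} (A : pset X) (h : perm X) : pset X :=
  fun g => exists a, A a /\ g = pconj a h.

Definition is_subgroup {X : Type} (A : pset X) : Prop :=
  A (pid X) /\ (forall g h, A g -> A h -> A (pmul g h)) /\
  (forall g, A g -> A (pinvp g)).

Definition in_Sym {X : Type} (sim : X -> X -> Prop) (g : perm X) : Prop :=
  forall x y, sim x y <-> sim (act x g) (act y g).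

Definition subgroup_Sym {X : Type} (sim : X -> X -> Prop) (A : pset X) : Prop :=
  is_subgroup A /\ forall g, A g -> in_Sym sim g.

Definition three_classes {X : Type} (sim : X -> X -> Prop) : Prop :=
  exists a b c : X, ~ sim a b /\ ~ sim a c /\ ~ sim b c.

(* two elements of A induce the same permutation of the classes *)
Definition same_bar {X : Type} (sim : X -> X -> Prop) (g h : perm X) : Prop :=
  forall w, sim (act w g) (act w h).

Definition fix_sharp {X : Type} (sim : X -> X -> Prop) (A : pset X) (x : X) : Prop :=
  (forall g, A g -> act x g = x) /\
  (forall y z, ~ sim y x -> ~ sim z x -> exists g, A g /\ act y g = z) /\
  (forall y g h, ~ sim y x -> A g -> A h -> act y g = act y h -> g = h).

(* the induced group Abar fixes xbar and is sharply transitive on Xbar \ {xbar} *)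
Definition fix_sharp_bar {X : Type} (sim : X -> X -> Prop) (A : pset X) (x : X) : Prop :=
  (forall g, A g -> sim (act x g) x) /\
  (forall y z, ~ sim y x -> ~ sim z x -> exists g, A g /\ sim (act y g) z) /\
  (forall y g h, ~ sim y x -> A g -> A h -> sim (act y g) (act y h) ->
     same_bar sim g h).

Definition bar_eq {X : Type} (sim : X -> X -> Prop) (A B : pset X) : Prop :=
  (forall g, A g -> exists h, B h /\ same_bar sim g h) /\
  (forall h, B h -> exists g, A g /\ same_bar sim g h).

Inductive gen {X : Type} (F : X -> pset X) : pset X :=
  | gen_in : forall y g, F y g -> gen F g
  | gen_id : gen F (pid X)
  | gen_mul : forall g h, gen F g -> gen F h -> gen F (pmul g h)
  | gen_inv : forall g, gen F g -> gen F (pinvp g).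

Definition LM0 {X : Type} (sim : X -> X -> Prop) (F : X -> pset X) : Prop :=
  forall x y, sim x y -> bar_eq sim (F x) (F y).
Definition LM1 {X : Type} (sim : X -> X -> Prop) (F : X -> pset X) : Prop :=
  forall x, fix_sharp sim (F x) x.
Definition LM1' {X : Type} (sim : X -> X -> Prop) (F : X -> pset X) : Prop :=
  forall x, fix_sharp_bar sim (F x) x.
Definition LM2 {X : Type} (F : X -> pset X) : Prop :=
  forall x g, gen F g -> pset_eq (pset_conj (F x) g) (F (act x g)).

Definition local_moufang {X : Type} (sim : X -> X -> Prop) (F : X -> pset X) : Prop :=
  three_classes sim /\ (forall x, subgroup_Sym sim (F x)) /\
  LM0 sim F /\ LM1 sim F /\ LM1' sim F /\ LM2 F.

Section Construction.
Variables (X : Type) (sim : X -> X -> Prop) (U : pset X) (tau : perm X) (inf : X).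

Definition zero : X := act inf tau.

(* alpha_x : the unique element of U with 0 alpha_x = x (for x not ~ inf) *)
Definition alpha (x : X) : perm X :=
  epsilon (inhabits (pid X)) (fun a => U a /\ act zero a = x).

Definition mneg (x : X) : X := act zero (pinvp (alpha x)).

Definition gamma (x : X) : perm X := pconj (alpha x) tau.

Definition tinv (x : X) : X := act x (pinvp tau).

Definition U0 : pset X := pset_conj U tau.

Definition Ux (x : X) : pset X :=
  fun g => (sim x inf /\ pset_conj U (gamma (tinv x)) g) \/
           (~ sim x inf /\ pset_conj U0 (alpha x) g).

Definition is_unit (x : X) : Prop := ~ sim x zero /\ ~ sim x inf.

Definition mu (x : X) : perm X :=
  pmul (pmul (gamma (tinv (mneg x))) (alpha x)) (gamma (mneg (tinv x))).

Definition hh (x : X) : perm X :=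
  pmul (pmul (pmul (pmul (pmul tau (alpha x)) (pinvp tau))
       (alpha (mneg (tinv x)))) tau)
       (alpha (mneg (act (mneg (tinv x)) tau))).

End Construction.

(* Main.v *)
Require Import Defs.
From Stdlib Require Import Classical ClassicalEpsilon FunctionalExtensionality.
Set Implicit Arguments.

Lemma perm_ext (X:Type) (g h : perm X) : (forall x, act x g = act x h) -> g = h.
Proof.
  destruct g as [f fi K KV], h as [f' fi' K' KV']; unfold act; simpl; intros E.
  assert (f = f') by (apply functional_extensionality; exact E). subst f'.
  assert (fi = fi'). { apply functional_extensionality; intro y.
    rewrite <- (KV' y) at 1. rewrite K. reflexivity. }
  subst fi'. f_equal; apply proof_irrelevance.
Qed.

Lemma act_mul X (x : X) g h : act x (pmul g h) = act (act x g) h. Proof. reflexivity. Qed.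
Lemma act_K X (x : X) g : act (act x g) (pinvp g) = x. Proof. apply pK. Qed.
Lemma act_KV X (x : X) g : act (act x (pinvp g)) g = x. Proof. apply pKV. Qed.
Lemma act_conj X (x : X) a h : act x (pconj a h) = act (act (act x (pinvp h)) a) h.
Proof. reflexivity. Qed.
Lemma act_id X (x : X) : act x (pid X) = x. Proof. reflexivity. Qed.
Lemma act_inj X (x y : X) g : act x g = act y g -> x = y.
Proof. intro E. rewrite <- (act_K x g), <- (act_K y g), E. reflexivity. Qed.
Lemma act_invinv X (x:X) g : act x (pinvp (pinvp g)) = act x g. Proof. reflexivity. Qed.

Lemma peq_refl X (A : pset X) : pset_eq A A. Proof. intro; tauto. Qed.
Lemma peq_sym X (A B : pset X) : pset_eq A B -> pset_eq B A. Proof. intros E g; split; apply E. Qed.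
Lemma peq_trans X (A B C : pset X) : pset_eq A B -> pset_eq B C -> pset_eq A C.
Proof. intros E F g; split; intro; [apply F, E|apply E, F]; auto. Qed.

Lemma conj_ext X (A : pset X) g h : (forall w, act w g = act w h) ->
  pset_eq (pset_conj A g) (pset_conj A h).
Proof. intro E. rewrite (perm_ext _ _ E). apply peq_refl. Qed.

Lemma conj_peq X (A B : pset X) g : pset_eq A B -> pset_eq (pset_conj A g) (pset_conj B g).
Proof. intros E k; split; intros [a [Ha ->]]; exists a; split; auto; apply E; auto. Qed.

Lemma conj_comp X (A : pset X) g h :
  pset_eq (pset_conj (pset_conj A g) h) (pset_conj A (pmul g h)).
Proof.
  intro k; split.
  - intros [b [[a [Ha ->]] ->]]. exists a; split; auto. apply perm_ext; intro; reflexivity.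
  - intros [a [Ha ->]]. exists (pconj a g); split. exists a; auto.
    apply perm_ext; intro; reflexivity.
Qed.

Lemma conj_id X (A : pset X) : pset_eq (pset_conj A (pid X)) A.
Proof.
  intro k; split.
  - intros [a [Ha ->]]. replace (pconj a (pid X)) with a; auto. apply perm_ext; intro; reflexivity.
  - intro Hk. exists k; split; auto. apply perm_ext; intro; reflexivity.
Qed.

Lemma conj_mem X (A : pset X) a g : A a -> pset_conj A g (pconj a g).
Proof. intro; exists a; auto. Qed.

Lemma conj_inv_l X (A B : pset X) g : pset_eq (pset_conj A g) B -> pset_eq A (pset_conj B (pinvp g)).
Proof.
  intro E. eapply peq_trans; [|apply conj_peq, E].
  eapply peq_trans; [|apply peq_sym, conj_comp].
  eapply peq_trans; [apply peq_sym, conj_id|]. apply conj_ext. intro w.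
  rewrite act_mul, act_K. reflexivity.
Qed.

Lemma conj_subgroup X (A : pset X) g : is_subgroup A -> A g -> pset_eq (pset_conj A g) A.
Proof.
  intros [H1 [Hm Hi]] Hg k; split.
  - intros [a [Ha ->]]. unfold pconj. apply Hm; auto.
  - intro Hk. exists (pmul (pmul g k) (pinvp g)). split. apply Hm; auto.
    apply perm_ext; intro w. rewrite act_conj, !act_mul, act_KV. unfold act; simpl; rewrite pKV; reflexivity.
Qed.

Lemma in_Sym_inv X sim (g : perm X) : in_Sym sim g -> in_Sym sim (pinvp g).
Proof. intros G x y. rewrite (G (act x (pinvp g)) (act y (pinvp g))), !act_KV. tauto. Qed.
Lemma in_Sym_mul X sim (g h : perm X) : in_Sym sim g -> in_Sym sim h -> in_Sym sim (pmul g h).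
Proof. intros G H x y. rewrite !act_mul, (G x y), (H (act x g) (act y g)). tauto. Qed.
Lemma in_Sym_conj X sim (a h : perm X) : in_Sym sim a -> in_Sym sim h -> in_Sym sim (pconj a h).
Proof. intros. unfold pconj. repeat apply in_Sym_mul; auto. apply in_Sym_inv; auto. Qed.

Lemma fix_sharp_conj X sim (A : pset X) p g : in_Sym sim g -> fix_sharp sim A p ->
  fix_sharp sim (pset_conj A g) (act p g).
Proof.
  intros G [F1 [F2 F3]]. split; [|split].
  - intros k [a [Ha ->]]. rewrite act_conj, act_K, F1; auto.
  - intros y z Hy Hz.
    assert (~ sim (act y (pinvp g)) p).
    { intro S. apply Hy. apply (G _ _) in S. rewrite act_KV in S. exact S. }
    assert (~ sim (act z (pinvp g)) p).
    { intro S. apply Hz. apply (G _ _) in S. rewrite act_KV in S. exact S. }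
    destruct (F2 _ _ H H0) as [a [Ha Ea]]. exists (pconj a g); split. exists a; auto.
    rewrite act_conj, Ea, act_KV. reflexivity.
  - intros y k1 k2 Hy [a1 [H1 ->]] [a2 [H2 ->]] E.
    rewrite !act_conj in E. apply act_inj in E.
    assert (~ sim (act y (pinvp g)) p).
    { intro S. apply Hy. apply (G _ _) in S. rewrite act_KV in S. exact S. }
    rewrite (F3 _ _ _ H H1 H2 E). reflexivity.
Qed.

Lemma fix_sharp_bar_conj X sim (A : pset X) p g : in_Sym sim g -> fix_sharp_bar sim A p ->
  fix_sharp_bar sim (pset_conj A g) (act p g).
Proof.
  intros G [F1 [F2 F3]]. split; [|split].
  - intros k [a [Ha ->]]. rewrite act_conj, act_K. apply (proj1 (G _ _)). auto.
  - intros y z Hy Hz.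
    assert (~ sim (act y (pinvp g)) p).
    { intro S. apply Hy. apply (G _ _) in S. rewrite act_KV in S. exact S. }
    assert (~ sim (act z (pinvp g)) p).
    { intro S. apply Hz. apply (G _ _) in S. rewrite act_KV in S. exact S. }
    destruct (F2 _ _ H H0) as [a [Ha Ea]]. exists (pconj a g); split. exists a; auto.
    rewrite act_conj. apply (G _ _) in Ea. rewrite act_KV in Ea. exact Ea.
  - intros y k1 k2 Hy [a1 [H1 ->]] [a2 [H2 ->]] E.
    rewrite !act_conj in E. apply (G _ _) in E.
    assert (~ sim (act y (pinvp g)) p).
    { intro S. apply Hy. apply (G _ _) in S. rewrite act_KV in S. exact S. }
    pose proof (F3 _ _ _ H H1 H2 E) as SB. intro w. rewrite !act_conj. apply (proj1 (G _ _)). apply SB.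
Qed.

Lemma fix_sharp_peq X sim (A B : pset X) p : pset_eq A B -> fix_sharp sim A p -> fix_sharp sim B p.
Proof.
  intros E [F1 [F2 F3]]. split; [|split].
  - intros; apply F1, E; auto.
  - intros y z Hy Hz. destruct (F2 y z Hy Hz) as [a [Ha Ea]]. exists a; split; auto; apply E; auto.
  - intros y g h Hy Hg Hh. apply F3; auto; apply E; auto.
Qed.

Lemma fix_sharp_bar_peq X sim (A B : pset X) p : pset_eq A B -> fix_sharp_bar sim A p -> fix_sharp_bar sim B p.
Proof.
  intros E [F1 [F2 F3]]. split; [|split].
  - intros; apply F1, E; auto.
  - intros y z Hy Hz. destruct (F2 y z Hy Hz) as [a [Ha Ea]]. exists a; split; auto; apply E; auto.
  - intros y g h Hy Hg Hh. apply F3; auto; apply E; auto.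
Qed.

Lemma subgroup_Sym_conj X sim (A : pset X) h : in_Sym sim h -> subgroup_Sym sim A ->
  subgroup_Sym sim (pset_conj A h).
Proof.
  intros Hh [[H1 [Hm Hi]] HS]. split; [split; [|split]|].
  - exists (pid X); split; auto. apply perm_ext; intro w. unfold act; simpl; rewrite pKV; auto.
  - intros g k [a [Ha ->]] [b [Hb ->]]. exists (pmul a b); split; auto.
    apply perm_ext; intro w. rewrite act_conj, !act_mul, !act_conj, act_K. reflexivity.
  - intros g [a [Ha ->]]. exists (pinvp a); split; auto.
    apply perm_ext; intro w. reflexivity.
  - intros g [a [Ha ->]]. apply in_Sym_conj; auto.
Qed.

Lemma subgroup_Sym_peq X sim (A B : pset X) : pset_eq A B -> subgroup_Sym sim A -> subgroup_Sym sim B.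
Proof.
  intros E [[H1 [Hm Hi]] HS]. split; [split; [|split]|].
  - apply E; auto.
  - intros; apply E; apply Hm; apply E; auto.
  - intros; apply E; apply Hi; apply E; auto.
  - intros; apply HS, E; auto.
Qed.

Section SB.
End SB.

Lemma same_bar_inv X (sim : X -> X -> Prop) (Hsym : forall x y, sim x y -> sim y x) g g' :
  in_Sym sim g -> in_Sym sim g' -> same_bar sim g g' -> same_bar sim (pinvp g) (pinvp g').
Proof.
  intros G G' S w. set (v := act w (pinvp g')).
  assert (sim (act v g) w) by (pose proof (S v); unfold v in *; rewrite act_KV in H; auto).
  apply (in_Sym_inv G) in H. rewrite act_K in H. fold v. apply Hsym; auto.
Qed.

Lemma same_bar_conj_r X (sim : X -> X -> Prop) (Hsym : forall x y, sim x y -> sim y x)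
  (Htrans : forall x y z, sim x y -> sim y z -> sim x z) a g g' :
  in_Sym sim a -> in_Sym sim g -> in_Sym sim g' -> same_bar sim g g' ->
  same_bar sim (pconj a g) (pconj a g').
Proof.
  intros A G G' S w. rewrite !act_conj.
  pose proof (same_bar_inv Hsym G G' S w) as T.
  apply (proj1 (A _ _)), (proj1 (G _ _)) in T. eapply Htrans; [exact T|]. apply S.
Qed.

Lemma same_bar_conj_l X (sim : X -> X -> Prop) a a' h :
  in_Sym sim h -> same_bar sim a a' -> same_bar sim (pconj a h) (pconj a' h).
Proof. intros Hh S w. rewrite !act_conj. apply (proj1 (Hh _ _)), S. Qed.

Lemma bar_eq_conj X (sim : X -> X -> Prop) (Hsym : forall x y, sim x y -> sim y x)
  (Htrans : forall x y z, sim x y -> sim y z -> sim x z) (A : pset X) g g' :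
  (forall a, A a -> in_Sym sim a) -> in_Sym sim g -> in_Sym sim g' -> same_bar sim g g' ->
  bar_eq sim (pset_conj A g) (pset_conj A g').
Proof.
  intros HA G G' S. split.
  - intros k [a [Ha ->]]. exists (pconj a g'); split. exists a; auto.
    apply same_bar_conj_r; auto; apply HA; auto.
  - intros k [a [Ha ->]]. exists (pconj a g); split. exists a; auto.
    intro w. apply (same_bar_conj_r Hsym Htrans (HA a Ha) G G' S w).
Qed.

Lemma bar_eq_peq X (sim : X -> X -> Prop) (A A' B B' : pset X) :
  pset_eq A A' -> pset_eq B B' -> bar_eq sim A B -> bar_eq sim A' B'.
Proof.
  intros EA EB [B1 B2]. split.
  - intros g Hg. destruct (B1 g (proj2 (EA g) Hg)) as [h [Hh S]]. exists h; split; auto. apply EB; auto.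
  - intros h Hh. destruct (B2 h (proj2 (EB h) Hh)) as [g [Hg S]]. exists g; split; auto. apply EA; auto.
Qed.

Section Main.
Variables (X : Type) (sim : X -> X -> Prop) (U : pset X) (tau : perm X) (inf : X).
Hypotheses (Hrefl : forall x, sim x x)
  (Hsym : forall x y, sim x y -> sim y x)
  (Htrans : forall x y z, sim x y -> sim y z -> sim x z)
  (HU : subgroup_Sym sim U)
  (Htau : in_Sym sim tau)
  (C1 : fix_sharp sim U inf)
  (C1' : fix_sharp_bar sim U inf)
  (C2a : ~ sim (act inf tau) inf)
  (C2b : act (act inf tau) tau = inf).

Notation z0 := (zero tau inf).
Notation al := (alpha U tau inf).
Notation ga := (gamma U tau inf).
Notation ng := (mneg U tau inf).
Notation ti := (tinv tau).
Notation UU0 := (U0 U tau).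
Notation M := (Ux sim U tau inf).

Lemma z0_tau : act z0 tau = inf. Proof. exact C2b. Qed.
Lemma inf_tinv : act inf (pinvp tau) = z0.
Proof. apply (act_inj _ _ tau). rewrite act_KV. symmetry. exact C2b. Qed.
Lemma z0_tinv : act z0 (pinvp tau) = inf. Proof. apply act_K. Qed.
Lemma nz0inf : ~ sim z0 inf. Proof. exact C2a. Qed.
Lemma ninfz0 : ~ sim inf z0. Proof. intro S; apply C2a, Hsym, S. Qed.

Lemma symiff x y z : sim x y -> (sim x z <-> sim y z).
Proof. split; intro; eauto. Qed.

Lemma HUS g : U g -> in_Sym sim g. Proof. apply HU. Qed.
Lemma Ufix g : U g -> act inf g = inf. Proof. apply C1. Qed.
Lemma Umul g h : U g -> U h -> U (pmul g h). Proof. apply HU. Qed.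
Lemma Uinv g : U g -> U (pinvp g). Proof. apply HU. Qed.
Lemma Uid : U (pid X). Proof. apply HU. Qed.

Lemma pres_pt (g : perm X) p x : in_Sym sim g -> act p g = p -> (sim (act x g) p <-> sim x p).
Proof. intros G E. rewrite (G x p), E. tauto. Qed.

Lemma U_pres g x : U g -> (sim (act x g) inf <-> sim x inf).
Proof. intro; apply pres_pt; [apply HUS|apply Ufix]; auto. Qed.

Lemma tau_pres0 x : sim (act x tau) z0 <-> sim x inf.
Proof. rewrite (Htau x inf). reflexivity. Qed.
Lemma tau_presinf x : sim (act x tau) inf <-> sim x z0.
Proof. rewrite (Htau x z0), z0_tau. reflexivity. Qed.
Lemma ti_tau x : act (ti x) tau = x. Proof. apply act_KV. Qed.
Lemma ti_inf x : sim (ti x) inf <-> sim x z0.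
Proof. rewrite <- (ti_tau x) at 2. rewrite tau_pres0. tauto. Qed.
Lemma ti_z0 x : sim (ti x) z0 <-> sim x inf.
Proof. rewrite <- (ti_tau x) at 2. rewrite tau_presinf. tauto. Qed.

Lemma alpha_spec y : ~ sim y inf -> U (al y) /\ act z0 (al y) = y.
Proof.
  intro Hy. unfold alpha. apply epsilon_spec.
  destruct C1 as [_ [F2 _]]. apply (F2 z0 y nz0inf Hy).
Qed.
Lemma alpha_U y : ~ sim y inf -> U (al y). Proof. apply alpha_spec. Qed.
Lemma alpha_z y : ~ sim y inf -> act z0 (al y) = y. Proof. apply alpha_spec. Qed.

Lemma alpha_uniq g y : U g -> act z0 g = y -> al y = g.
Proof.
  intros Hg E. assert (Hy : ~ sim y inf).
  { subst y. rewrite U_pres; auto. }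
  destruct C1 as [_ [_ F3]]. apply (F3 z0); auto. apply alpha_U; auto.
  rewrite alpha_z; auto.
Qed.

Lemma alpha_mul x u : ~ sim x inf -> U u -> al (act x u) = pmul (al x) u.
Proof. intros. apply alpha_uniq. apply Umul; auto. apply alpha_U; auto.
  rewrite act_mul, alpha_z; auto. Qed.

Lemma alpha_z0 : al z0 = pid X.
Proof. apply alpha_uniq. apply Uid. reflexivity. Qed.

Lemma mneg_prop x : ~ sim x inf -> al (ng x) = pinvp (al x) /\ ~ sim (ng x) inf.
Proof.
  intro Hx. assert (al (ng x) = pinvp (al x)). apply alpha_uniq. apply Uinv, alpha_U; auto. reflexivity.
  split; auto. unfold mneg. rewrite U_pres. exact nz0inf. apply Uinv, alpha_U; auto.
Qed.
Lemma mneg_alpha x : ~ sim x inf -> al (ng x) = pinvp (al x). Proof. apply mneg_prop. Qed.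
Lemma mneg_ninf x : ~ sim x inf -> ~ sim (ng x) inf. Proof. apply mneg_prop. Qed.
Lemma mneg_mneg x : ~ sim x inf -> ng (ng x) = x.
Proof. intro Hx. unfold mneg at 1. rewrite mneg_alpha; auto. apply alpha_z; auto. Qed.
Lemma mneg_z0 x : ~ sim x inf -> (sim (ng x) z0 <-> sim x z0).
Proof.
  intro Hx. pose proof (HUS (alpha_U Hx)) as G. unfold mneg.
  rewrite (G (act z0 (pinvp (al x))) z0), act_KV, alpha_z; auto. split; auto.
Qed.

Lemma U0_sg : subgroup_Sym sim UU0. Proof. apply subgroup_Sym_conj; auto. Qed.
Lemma U0_sharp : fix_sharp sim UU0 z0. Proof. apply fix_sharp_conj; auto. Qed.
Lemma U0_sharp_bar : fix_sharp_bar sim UU0 z0. Proof. apply fix_sharp_bar_conj; auto. Qed.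
Lemma U0S g : UU0 g -> in_Sym sim g. Proof. apply U0_sg. Qed.
Lemma U0fix g : UU0 g -> act z0 g = z0. Proof. apply U0_sharp. Qed.
Lemma U0_pres g x : UU0 g -> (sim (act x g) z0 <-> sim x z0).
Proof. intro; apply pres_pt; [apply U0S|apply U0fix]; auto. Qed.
Lemma U0mul g h : UU0 g -> UU0 h -> UU0 (pmul g h). Proof. apply U0_sg. Qed.
Lemma U0inv g : UU0 g -> UU0 (pinvp g). Proof. apply U0_sg. Qed.

Lemma gamma_U0 y : ~ sim y inf -> UU0 (ga y).
Proof. intro; apply conj_mem, alpha_U; auto. Qed.
Lemma gamma_inf y : ~ sim y inf -> act inf (ga y) = act y tau.
Proof. intro. unfold gamma. rewrite act_conj, inf_tinv, alpha_z; auto. Qed.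
Lemma gamma_uniq g : UU0 g -> ~ sim (act inf g) z0 -> ga (ti (act inf g)) = g.
Proof.
  intros Hg Hp. assert (~ sim (ti (act inf g)) inf) by (rewrite ti_inf; auto).
  destruct U0_sharp as [_ [_ F3]]. apply (F3 inf). exact ninfz0. apply gamma_U0; auto. auto.
  rewrite gamma_inf, ti_tau; auto.
Qed.
Lemma gamma_neg y : ~ sim y inf -> ga (ng y) = pinvp (ga y).
Proof. intro. unfold gamma at 1. rewrite mneg_alpha; auto. apply perm_ext; intro; reflexivity. Qed.
Lemma gamma_z0 : ga z0 = pid X.
Proof. unfold gamma. rewrite alpha_z0. apply perm_ext; intro w. unfold act; simpl. apply pKV. Qed.

Lemma M_A x : ~ sim x inf -> pset_eq (M x) (pset_conj UU0 (al x)).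
Proof. intros Hx g; unfold Ux; split; [intros [[S _]|[_ P]]; tauto|intro; right; auto]. Qed.
Lemma M_V x : sim x inf -> pset_eq (M x) (pset_conj U (ga (ti x))).
Proof. intros Hx g; unfold Ux; split; [intros [[_ P]|[S _]]; tauto|intro; left; auto]. Qed.
Lemma ti_inf0 : ti inf = z0. Proof. apply inf_tinv. Qed.
Lemma M_inf : pset_eq (M inf) U.
Proof. eapply peq_trans. apply M_V; auto. rewrite ti_inf0, gamma_z0. apply conj_id. Qed.
Lemma M_z0 : pset_eq (M z0) UU0.
Proof. eapply peq_trans. apply M_A; exact nz0inf. rewrite alpha_z0. apply conj_id. Qed.

Lemma ti_sim x y : sim x y -> sim (ti x) (ti y).
Proof. intro S. apply (proj1 (in_Sym_inv Htau _ _)). exact S. Qed.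
Lemma neq_inf_z0 x : sim x inf -> ~ sim x z0.
Proof. intros S T. apply ninfz0. eauto. Qed.
Lemma ti_ninf_of_inf x : sim x inf -> ~ sim (ti x) inf.
Proof. intros S. rewrite ti_inf. apply neq_inf_z0; auto. Qed.

Lemma LM1_M : LM1 sim M.
Proof.
  intro x. destruct (classic (sim x inf)) as [S|S].
  - eapply fix_sharp_peq. apply peq_sym, M_V; auto.
    pose proof (ti_ninf_of_inf S) as Hy.
    assert (E: act inf (ga (ti x)) = x) by (rewrite gamma_inf, ti_tau; auto).
    pose proof (fix_sharp_conj (U0S (gamma_U0 Hy)) C1) as K. rewrite E in K. exact K.
  - eapply fix_sharp_peq. apply peq_sym, M_A; auto.
    pose proof (fix_sharp_conj (HUS (alpha_U S)) U0_sharp) as K. rewrite alpha_z in K; auto.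
Qed.

Lemma LM1'_M : LM1' sim M.
Proof.
  intro x. destruct (classic (sim x inf)) as [S|S].
  - eapply fix_sharp_bar_peq. apply peq_sym, M_V; auto.
    pose proof (ti_ninf_of_inf S) as Hy.
    assert (E: act inf (ga (ti x)) = x) by (rewrite gamma_inf, ti_tau; auto).
    pose proof (fix_sharp_bar_conj (U0S (gamma_U0 Hy)) C1') as K. rewrite E in K. exact K.
  - eapply fix_sharp_bar_peq. apply peq_sym, M_A; auto.
    pose proof (fix_sharp_bar_conj (HUS (alpha_U S)) U0_sharp_bar) as K. rewrite alpha_z in K; auto.
Qed.

Lemma M_sg x : subgroup_Sym sim (M x).
Proof.
  destruct (classic (sim x inf)) as [S|S].
  - eapply subgroup_Sym_peq. apply peq_sym, M_V; auto.
    apply subgroup_Sym_conj; auto. apply U0S, gamma_U0, ti_ninf_of_inf; auto.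
  - eapply subgroup_Sym_peq. apply peq_sym, M_A; auto.
    apply subgroup_Sym_conj. apply HUS, alpha_U; auto. apply U0_sg.
Qed.

Lemma alpha_same_bar a b : ~ sim a inf -> ~ sim b inf -> sim a b -> same_bar sim (al a) (al b).
Proof.
  intros Ha Hb S. destruct C1' as [_ [_ F3]]. apply (F3 z0). exact nz0inf.
  apply alpha_U; auto. apply alpha_U; auto. rewrite !alpha_z; auto.
Qed.

Lemma LM0_M : LM0 sim M.
Proof.
  intros x y Sxy. destruct (classic (sim x inf)) as [S|S].
  - assert (Sy : sim y inf) by eauto.
    eapply bar_eq_peq. apply peq_sym, M_V; auto. apply peq_sym, M_V; auto.
    apply bar_eq_conj; auto. apply HUS.
    apply U0S, gamma_U0, ti_ninf_of_inf; auto. apply U0S, gamma_U0, ti_ninf_of_inf; auto.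
    apply same_bar_conj_l; auto. apply alpha_same_bar.
    apply ti_ninf_of_inf; auto. apply ti_ninf_of_inf; auto. apply ti_sim; auto.
  - assert (Sy : ~ sim y inf) by eauto.
    eapply bar_eq_peq. apply peq_sym, M_A; auto. apply peq_sym, M_A; auto.
    apply bar_eq_conj; auto. apply U0S.
    apply HUS, alpha_U; auto. apply HUS, alpha_U; auto.
    apply alpha_same_bar; auto.
Qed.

Notation unit := (is_unit sim tau inf).

Lemma unit_ng c : unit c -> unit (ng c).
Proof. intros [H0 Hi]. split. rewrite mneg_z0; auto. apply mneg_ninf; auto. Qed.
Lemma a_ninf c : unit c -> ~ sim (ti (ng c)) inf.
Proof. intros Hc. rewrite ti_inf. apply unit_ng; auto. Qed.
Lemma tic_ninf c : unit c -> ~ sim (ti c) inf.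
Proof. intros [H0 Hi]. rewrite ti_inf; auto. Qed.
Lemma tic_nz0 c : unit c -> ~ sim (ti c) z0.
Proof. intros [H0 Hi]. rewrite ti_z0; auto. Qed.
Lemma b_ninf c : unit c -> ~ sim (ng (ti c)) inf.
Proof. intros Hc. apply mneg_ninf, tic_ninf; auto. Qed.

Lemma mu_S c : unit c -> in_Sym sim (mu U tau inf c).
Proof.
  intros Hc. unfold mu. apply in_Sym_mul; [apply in_Sym_mul|].
  apply U0S, gamma_U0, a_ninf; auto. apply HUS, alpha_U, Hc. apply U0S, gamma_U0, b_ninf; auto.
Qed.
Lemma mu_inf c : unit c -> act inf (mu U tau inf c) = z0.
Proof.
  intros Hc. unfold mu. rewrite !act_mul, gamma_inf, ti_tau by (apply a_ninf; auto).
  unfold mneg at 1. rewrite act_KV. apply U0fix, gamma_U0, b_ninf; auto.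
Qed.
Lemma mu_z0 c : unit c -> act z0 (mu U tau inf c) = inf.
Proof.
  intros Hc. unfold mu. rewrite !act_mul, U0fix by (apply gamma_U0, a_ninf; auto).
  rewrite alpha_z by apply Hc. rewrite gamma_neg by (apply tic_ninf; auto).
  apply (act_inj _ _ (ga (ti c))). rewrite act_KV. symmetry; rewrite gamma_inf, ti_tau; auto.
  apply tic_ninf; auto.
Qed.
Lemma mu_inv_z0 c : unit c -> act z0 (pinvp (mu U tau inf c)) = inf.
Proof. intros Hc. apply (act_inj _ _ (mu U tau inf c)). rewrite act_KV, mu_inf; auto. Qed.
Lemma mu_inv_inf c : unit c -> act inf (pinvp (mu U tau inf c)) = z0.
Proof. intros Hc. apply (act_inj _ _ (mu U tau inf c)). rewrite act_KV, mu_z0; auto. Qed.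

Lemma mu_neg c : unit c -> mu U tau inf (ng c) = pinvp (mu U tau inf c).
Proof.
  intros Hc. unfold mu. rewrite (mneg_mneg (proj2 Hc)), (mneg_alpha (proj2 Hc)).
  rewrite (gamma_neg (a_ninf Hc)), (gamma_neg (tic_ninf Hc)).
  apply perm_ext; intro; reflexivity.
Qed.

Lemma alpha_decomp c : unit c ->
  al c = pmul (pmul (pinvp (ga (ti (ng c)))) (mu U tau inf c)) (ga (ti c)).
Proof.
  intros Hc. apply perm_ext; intro w. unfold mu. rewrite (gamma_neg (tic_ninf Hc)).
  rewrite !act_mul, !act_KV. reflexivity.
Qed.

Lemma hh_decomp c : hh U tau inf c =
  pmul (pmul (pmul tau (pinvp (ga (ti (ng c))))) (mu U tau inf c)) (al (ng (act (ng (ti c)) tau))).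
Proof.
  apply perm_ext; intro w. unfold hh, mu. rewrite !act_mul, act_KV. reflexivity.
Qed.

Lemma cprime_U c : unit c -> U (al (ng (act (ng (ti c)) tau))).
Proof.
  intros Hc. apply alpha_U, mneg_ninf. rewrite tau_presinf, mneg_z0, ti_z0. apply Hc.
  apply tic_ninf; auto.
Qed.

Lemma conj_inv_r (A B : pset X) g : pset_eq (pset_conj A (pinvp g)) B -> pset_eq A (pset_conj B g).
Proof. intro E. eapply peq_trans. apply conj_inv_l, E. apply conj_ext; intro; reflexivity. Qed.

Lemma conj_cancel (A : pset X) g : pset_eq (pset_conj (pset_conj A (pinvp g)) g) A.
Proof. eapply peq_trans. apply conj_comp. eapply peq_trans; [|apply conj_id].
  apply conj_ext; intro; apply act_KV. Qed.

Lemma hh_key c : unit c -> pset_eq (pset_conj U (hh U tau inf c))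
   (pset_conj (pset_conj UU0 (mu U tau inf c)) (al (ng (act (ng (ti c)) tau)))).
Proof.
  intros Hc. rewrite hh_decomp.
  eapply peq_trans. apply peq_sym, conj_comp. apply conj_peq.
  eapply peq_trans. apply peq_sym, conj_comp. apply conj_peq.
  eapply peq_trans. apply peq_sym, conj_comp.
  apply conj_subgroup. apply U0_sg. apply U0inv, gamma_U0, a_ninf; auto.
Qed.

Definition WW := forall c, unit c -> pset_eq (pset_conj UU0 (mu U tau inf c)) U.

Lemma ii_W c : unit c -> (pset_eq (pset_conj U (hh U tau inf c)) U <->
   pset_eq (pset_conj UU0 (mu U tau inf c)) U).
Proof.
  intros Hc. pose proof (cprime_U Hc) as HA. split; intro E.
  - pose proof (peq_trans (peq_sym (hh_key Hc)) E) as F. apply conj_inv_l in F.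
    eapply peq_trans. exact F. apply conj_subgroup. apply HU. apply Uinv; auto.
  - eapply peq_trans. apply hh_key; auto. eapply peq_trans. apply conj_peq, E.
    apply conj_subgroup. apply HU. auto.
Qed.

Lemma iii_W : (forall x, unit x -> pset_eq UU0 (pset_conj U (mu U tau inf x))) <-> WW.
Proof.
  split.
  - intros H c Hc. pose proof (H _ (unit_ng Hc)) as E. rewrite (mu_neg Hc) in E.
    eapply peq_trans. apply conj_peq, E. apply conj_cancel.
  - intros H x Hx. pose proof (H _ (unit_ng Hx)) as E. rewrite (mu_neg Hx) in E.
    apply conj_inv_r; auto.
Qed.

Lemma unit_exists : three_classes sim -> exists c, unit c.
Proof.
  intros [a [b [c [Hab [Hac Hbc]]]]].
  assert (K : forall p, unit p \/ sim p z0 \/ sim p inf).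
  { intro p. destruct (classic (sim p z0)); auto. destruct (classic (sim p inf)); auto.
    left; split; auto. }
  destruct (K a) as [?|[?|?]]; [eauto| |];
  (destruct (K b) as [?|[?|?]]; [eauto| |]);
  (destruct (K c) as [?|[?|?]]; [eauto| |]).
  all: exfalso.
  all: first [apply Hab; eauto; fail | apply Hac; eauto; fail | apply Hbc; eauto; fail].
Qed.

Definition Q g x := pset_eq (pset_conj (M x) g) (M (act x g)).

Lemma Q_mul g h x : Q g x -> Q h (act x g) -> Q (pmul g h) x.
Proof.
  unfold Q; intros E F. eapply peq_trans. apply peq_sym, conj_comp.
  eapply peq_trans. apply conj_peq, E. exact F.
Qed.

Lemma Q_inv g x : Q g (act x (pinvp g)) -> Q (pinvp g) x.
Proof.
  unfold Q; intros E. rewrite act_KV in E. apply peq_sym. apply conj_inv_l. exact E.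
Qed.

Lemma Q_id x : Q (pid X) x.
Proof. unfold Q. apply conj_id. Qed.

Definition PP g := forall x, Q g x.
Lemma P_mul g h : PP g -> PP h -> PP (pmul g h).
Proof. intros A B x. apply Q_mul; auto. Qed.
Lemma P_inv g : PP g -> PP (pinvp g).
Proof. intros A x. apply Q_inv; auto. Qed.
Lemma P_conj a h : PP a -> PP h -> PP (pconj a h).
Proof. intros. unfold pconj. repeat apply P_mul; auto. apply P_inv; auto. Qed.

Lemma E1 u x : U u -> ~ sim x inf -> Q u x.
Proof.
  intros Hu Hx. unfold Q. eapply peq_trans. apply conj_peq, M_A; auto.
  eapply peq_trans. apply conj_comp. rewrite <- alpha_mul; auto.
  apply peq_sym, M_A. rewrite U_pres; auto.
Qed.

Section WSec.
Hypothesis HW : WW.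
Hypothesis H3 : three_classes sim.

Lemma W1 c : unit c -> pset_eq (pset_conj U (mu U tau inf c)) UU0.
Proof.
  intros Hc. pose proof (HW (unit_ng Hc)) as E. rewrite (mu_neg Hc) in E.
  apply peq_sym. apply conj_inv_r; auto.
Qed.

Lemma Vform_unit x : unit x -> pset_eq (pset_conj UU0 (al x)) (pset_conj U (ga (ti x))).
Proof.
  intros Hx. rewrite (alpha_decomp Hx) at 1.
  eapply peq_trans. apply peq_sym, conj_comp. apply conj_peq.
  eapply peq_trans. apply peq_sym, conj_comp.
  eapply peq_trans. apply conj_peq. apply conj_subgroup. apply U0_sg. apply U0inv, gamma_U0, a_ninf; auto.
  apply HW; auto.
Qed.

Lemma M_V' x : ~ sim x z0 -> pset_eq (M x) (pset_conj U (ga (ti x))).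
Proof.
  intros Hx. destruct (classic (sim x inf)) as [S|S]. apply M_V; auto.
  eapply peq_trans. apply M_A; auto. apply Vform_unit. split; auto.
Qed.

Lemma E2 v x : UU0 v -> ~ sim x z0 -> Q v x.
Proof.
  intros Hv Hx. unfold Q. eapply peq_trans. apply conj_peq, M_V'; auto.
  eapply peq_trans. apply conj_comp.
  assert (Hp : ~ sim (act x v) z0) by (rewrite U0_pres; auto).
  assert (E : ga (ti (act inf (pmul (ga (ti x)) v))) = pmul (ga (ti x)) v).
  { apply gamma_uniq. apply U0mul; auto. apply gamma_U0. rewrite ti_inf; auto.
    rewrite act_mul, gamma_inf, ti_tau; auto. rewrite ti_inf; auto. }
  rewrite act_mul, gamma_inf, ti_tau in E by (rewrite ti_inf; auto).
  rewrite <- E. apply peq_sym, M_V'; auto.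
Qed.

Lemma PM c x : unit c -> Q (mu U tau inf c) x.
Proof.
  intros Hc. set (m := mu U tau inf c).
  pose proof (mu_S Hc) as Ms. fold m in Ms.
  unfold Q. destruct (classic (sim x inf)) as [S|S].
  - eapply peq_trans. apply conj_peq, M_V; auto.
    eapply peq_trans. apply conj_comp.
    assert (UE : pset_eq U (pset_conj UU0 (pinvp m))) by (apply conj_inv_l, W1; auto).
    eapply peq_trans. apply conj_peq, UE.
    eapply peq_trans. apply conj_comp.
    assert (Hy : ~ sim (ti x) inf) by (apply ti_ninf_of_inf; auto).
    assert (E : al (act x m) = pconj (ga (ti x)) m).
    { apply alpha_uniq. apply (proj1 (HW Hc _)). apply conj_mem, gamma_U0; auto.
      rewrite act_conj. unfold m. rewrite mu_inv_z0, gamma_inf, ti_tau; auto. }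
    assert (Hxm : ~ sim (act x m) inf).
    { intro T. apply ninfz0. apply (proj1 (Ms x inf)) in S. unfold m in S.
      rewrite mu_inf in S; auto. eauto. }
    eapply peq_trans; [|apply peq_sym, M_A; auto]. rewrite E.
    apply conj_ext; intro; reflexivity.
  - eapply peq_trans. apply conj_peq, M_A; auto.
    eapply peq_trans. apply conj_comp.
    eapply peq_trans. apply conj_peq, peq_sym, (W1 Hc).
    eapply peq_trans. apply conj_comp.
    assert (F : pset_eq (pset_conj U (pmul m m)) U).
    { eapply peq_trans. apply peq_sym, conj_comp. eapply peq_trans. apply conj_peq, (W1 Hc).
      apply HW; auto. }
    eapply peq_trans. apply (conj_ext U (pmul m (pmul (al x) m)) (pmul (pmul m m) (pconj (al x) m))).
    { intro w. rewrite !act_mul, act_conj, act_K. reflexivity. }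
    eapply peq_trans. apply peq_sym, conj_comp. eapply peq_trans. apply conj_peq, F.
    assert (Hxm : ~ sim (act x m) z0).
    { intro T. apply S. apply (proj2 (Ms x inf)). unfold m at 2. rewrite mu_inf; auto. }
    assert (E : ga (ti (act inf (pconj (al x) m))) = pconj (al x) m).
    { apply gamma_uniq. apply (proj1 (W1 Hc _)). apply conj_mem, alpha_U; auto.
      rewrite act_conj. unfold m. rewrite mu_inv_inf, alpha_z; auto. }
    rewrite act_conj in E. unfold m in E. rewrite mu_inv_inf, alpha_z in E; auto. fold m in E.
    rewrite <- E. apply peq_sym, M_V'; auto.
Qed.

Lemma QA c x : unit c -> sim x inf -> Q (al c) x.
Proof.
  intros Hc S. pose proof (alpha_decomp Hc) as D.
  assert (Hx0 : ~ sim x z0) by (apply neq_inf_z0; auto).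
  rewrite D. apply Q_mul; [apply Q_mul|].
  - apply E2; auto. apply U0inv, gamma_U0, a_ninf; auto.
  - apply PM; auto.
  - apply E2; auto. apply gamma_U0, tic_ninf; auto.
    intro T.
    apply (proj2 (U0_pres _ (gamma_U0 (tic_ninf Hc)))) in T. rewrite <- act_mul, <- D in T.
    apply (neq_inf_z0 (x := act x (al c))); auto. rewrite U_pres; auto. apply alpha_U, Hc.
Qed.

Lemma QU u x : U u -> Q u x.
Proof.
  intros Hu. destruct (classic (sim x inf)) as [S|S]; [|apply E1; auto].
  set (c := act z0 u).
  assert (Hci : ~ sim c inf) by (unfold c; rewrite U_pres; auto; exact nz0inf).
  destruct (classic (sim c z0)) as [T|T].
  - destruct (unit_exists H3) as [t Ht].
    set (u1 := pmul u (pinvp (al t))).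
    assert (Hu1 : U u1) by (apply Umul; auto; apply Uinv, alpha_U, Ht).
    assert (Eu : u = pmul u1 (al t)).
    { apply perm_ext; intro w. unfold u1. rewrite !act_mul, act_KV. reflexivity. }
    set (d := act z0 u1).
    assert (Hd : unit d).
    { split.
      - intro D. apply (proj1 Ht). unfold d, u1 in D. rewrite act_mul in D.
        apply (proj1 (HUS (alpha_U (proj2 Ht)) _ _)) in D. rewrite act_KV, alpha_z in D by apply Ht.
        fold c in D. eauto.
      - unfold d. rewrite U_pres; auto. }
    assert (E1' : al d = u1) by (apply alpha_uniq; auto).
    rewrite Eu. apply Q_mul.
    + rewrite <- E1'. apply QA; auto.
    + apply QA; auto. rewrite U_pres; auto.
  - assert (E : al c = u) by (apply alpha_uniq; auto).
    rewrite <- E. apply QA; auto. split; auto.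
Qed.

Lemma QU0 v x : UU0 v -> Q v x.
Proof.
  intros Hv. destruct (unit_exists H3) as [t Ht]. set (m := mu U tau inf t).
  assert (Ev : v = pmul (pmul (pinvp m) (pconj v (pinvp m))) m).
  { clearbody m. apply perm_ext; intro w. unfold act; simpl.
    rewrite !pKV. reflexivity. }
  assert (Hu : U (pconj v (pinvp m))).
  { apply (proj2 (conj_inv_l (W1 Ht) _)). apply conj_mem; auto. }
  rewrite Ev. apply Q_mul; [apply Q_mul|].
  - apply Q_inv. apply PM; auto.
  - apply QU; auto.
  - apply PM; auto.
Qed.


Lemma LM2_M : LM2 M.
Proof.
  intros x g Hg. revert x. change (PP g).
  induction Hg as [y g Hy| |g h _ IHg _ IHh|g _ IHg].
  - destruct (classic (sim y inf)) as [S|S].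
    + apply M_V in Hy; auto. destruct Hy as [a [Ha ->]]. apply P_conj.
      intro; apply QU; auto. intro; apply QU0, gamma_U0, ti_ninf_of_inf; auto.
    + apply M_A in Hy; auto. destruct Hy as [a [Ha ->]]. apply P_conj.
      intro; apply QU0; auto. intro; apply QU, alpha_U; auto.
  - intro; apply Q_id.
  - apply P_mul; auto.
  - apply P_inv; auto.
Qed.

End WSec.

Lemma W_i : three_classes sim -> WW -> local_moufang sim M.
Proof.
  intros H3 HW. split; auto. split. apply M_sg. split. apply LM0_M. split. apply LM1_M.
  split. apply LM1'_M. apply LM2_M; auto.
Qed.

Lemma i_iii : local_moufang sim M -> forall x, unit x -> pset_eq UU0 (pset_conj U (mu U tau inf x)).
Proof.
  intros [_ [_ [_ [_ [_ L2]]]]] x Hx.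
  assert (G : gen M (mu U tau inf x)).
  { unfold mu. apply gen_mul; [apply gen_mul|].
    - apply (@gen_in _ M z0). apply M_z0. apply gamma_U0, a_ninf; auto.
    - apply (@gen_in _ M inf). apply M_inf. apply alpha_U, Hx.
    - apply (@gen_in _ M z0). apply M_z0. apply gamma_U0, b_ninf; auto. }
  pose proof (L2 inf _ G) as E. rewrite mu_inf in E; auto.
  eapply peq_trans. apply peq_sym, M_z0. eapply peq_trans. apply peq_sym, E.
  apply conj_peq, M_inf.
Qed.

Lemma final_sec (H3 : three_classes sim) :
  let M := Ux sim U tau inf in
  (LM0 sim M /\ LM1 sim M /\ LM1' sim M) /\
  ((local_moufang sim M <->
      (forall x, is_unit sim tau inf x ->
         pset_eq (pset_conj U (hh U tau inf x)) U)) /\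
   ((forall x, is_unit sim tau inf x ->
         pset_eq (pset_conj U (hh U tau inf x)) U) <->
    (forall x, is_unit sim tau inf x ->
         pset_eq (U0 U tau) (pset_conj U (mu U tau inf x))))).
Proof.
  cbv zeta.
  assert (EII : (forall x, unit x -> pset_eq (pset_conj U (hh U tau inf x)) U) <-> WW).
  { split; intros H x Hx. apply (proj1 (ii_W Hx)), H, Hx. apply (proj2 (ii_W Hx)), H, Hx. }
  split; [split; [apply LM0_M|split; [apply LM1_M|apply LM1'_M]]|split].
  - split. intro L. apply EII. apply iii_W. apply i_iii; auto.
    intro H. apply W_i; auto. apply EII; auto.
  - rewrite EII. symmetry. apply iii_W.
Qed.

End Main.

Theorem mainTheorem7 (X : Type) (sim : X -> X -> Prop) (U : pset X)
  (tau : perm X) (inf : X)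
  (Hrefl : forall x, sim x x)
  (Hsym : forall x y, sim x y -> sim y x)
  (Htrans : forall x y z, sim x y -> sim y z -> sim x z)
  (H3 : three_classes sim)
  (HU : subgroup_Sym sim U)
  (Htau : in_Sym sim tau)
  (C1 : fix_sharp sim U inf)
  (C1' : fix_sharp_bar sim U inf)
  (C2a : ~ sim (act inf tau) inf)
  (C2b : act (act inf tau) tau = inf) :
  let M := Ux sim U tau inf in
  (LM0 sim M /\ LM1 sim M /\ LM1' sim M) /\
  ((local_moufang sim M <->
      (forall x, is_unit sim tau inf x ->
         pset_eq (pset_conj U (hh U tau inf x)) U)) /\
   ((forall x, is_unit sim tau inf x ->
         pset_eq (pset_conj U (hh U tau inf x)) U) <->
    (forall x, is_unit sim tau inf x ->
         pset_eq (U0 U tau) (pset_conj U (mu U tau inf x))))).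
Proof.
  apply final_sec; assumption.
Qed.
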